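(* Let $(X,d)$ be a path-connected compact metric space, $x_0\in X$, $n\geq1$. Then the topology on $\pi_n(X,x_0)$ induced by the pseudometric $\rho$ is at least as fine as the shape topology on $\pi_n(X,x_0)$.
   Context: $\Omega^n(X,x_0)$ is the set of continuous maps $\alpha:[0,1]^n\to X$ with $\alpha(\partial[0,1]^n)=\{x_0\}$, with uniform metric $\mu(\alpha,\beta)=\sup_t d(\alpha(t),\beta(t))$, and $\rho(a,b)=\inf\{\mu(\alpha,\beta)\mid\alpha\in a,\beta\in b\}$. Shape topology: let $\mathrm{cov}(X)$ be the set of pairs $(\mathscr{U},U_0)$, $\mathscr{U}$ a locally finite open cover of $X$ and $U_0\in\mathscr{U}$ containing $x_0$. Let $|N(\mathscr{U})|$ be the geometric realization of the nerve of $\mathscr{U}$. A partition of unity $\{\phi_U\}$ subordinate to $\mathscr{U}$ with $\phi_{U_0}(x_0)=1$ gives a canonical map $p_{\mathscr{U}}:(X,x_0)\to(|N(\mathscr{U})|,U_0)$ with barycentric coordinates $\phi_U(x)$. The shape topology is the group topology on $\pi_n(X,x_0)$ having the subgroups $\ker(p_{\mathscr{U}\#}:\pi_n(X,x_0)\to\pi_n(|N(\mathscr{U})|,U_0))$, $(\mathscr{U},U_0)\in\mathrm{cov}(X)$, as a neighborhood base of the identity (equivalently the initial topology with respect to the canonical homomorphism to the shape homotopy group $\varprojlim\pi_n(|N(\mathscr{U})|,U_0)$ of discrete groups). *)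

(* Defs.v *)
From HB Require Import structures.
From mathcomp Require Import all_boot all_order all_algebra.
From mathcomp Require Import all_classical all_reals all_analysis.
Set Implicit Arguments. Unset Strict Implicit. Unset Printing Implicit Defensive.
Import Order.TTheory GRing.Theory Num.Theory numFieldTopology.Exports.
Local Open Scope classical_set_scope.
Local Open Scope ring_scope.

Section Defs.
Variable R : realType.

Definition unitI : set R := [set s | 0 <= s <= 1].

Definition ucube (n : nat) : set 'rV[R]_n :=
  [set t | forall i : 'I_n, 0 <= t ord0 i <= 1].

Definition ucube_bd (n : nat) : set 'rV[R]_n :=
  [set t | @ucube n t /\ exists i : 'I_n, t ord0 i = 0 \/ t ord0 i = 1].

Definition Omega_in {Y : topologicalType} (S : set Y) (y0 : Y) (n : nat)
  : set ('rV[R]_n -> Y) :=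
  [set f : 'rV[R]_n -> Y | {within @ucube n, continuous f} /\
           (forall t, @ucube n t -> S (f t)) /\
           (forall t, @ucube_bd n t -> f t = y0)].

Definition rel_htpy {Y : topologicalType} (S : set Y) (y0 : Y) (n : nat)
  (f g : 'rV[R]_n -> Y) : Prop :=
  exists H : 'rV[R]_n * R -> Y,
    {within @ucube n `*` unitI, continuous H} /\
    (forall p, (@ucube n `*` unitI) p -> S (H p)) /\
    (forall t, @ucube n t -> H (t, 0) = f t /\ H (t, 1) = g t) /\
    (forall t s, @ucube_bd n t -> unitI s -> H (t, s) = y0).

Section Space.
Variable X : metricType R.

Definition Omega (x0 : X) (n : nat) : set ('rV[R]_n -> X) :=
  @Omega_in _ [set: X] x0 n.

Definition htpy_class (x0 : X) (n : nat) (alpha : 'rV[R]_n -> X)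
  : set ('rV[R]_n -> X) :=
  [set beta | @Omega x0 n beta /\ rel_htpy [set: X] x0 alpha beta].

Definition pin_set (x0 : X) (n : nat) : set (set ('rV[R]_n -> X)) :=
  [set a | exists2 alpha, @Omega x0 n alpha & a = htpy_class x0 alpha].

Definition mu_dist (n : nat) (alpha beta : 'rV[R]_n -> X) : R :=
  sup [set mdist (alpha t) (beta t) | t in @ucube n].

Definition rho_dist (n : nat) (a b : set ('rV[R]_n -> X)) : R :=
  inf [set r | exists alpha beta, a alpha /\ b beta /\ r = mu_dist alpha beta].

Definition rho_open (x0 : X) (n : nat) (V : set (set ('rV[R]_n -> X))) : Prop :=
  V `<=` @pin_set x0 n /\
  forall a, V a -> exists2 e : R, 0 < e &
    forall b, @pin_set x0 n b -> rho_dist a b < e -> V b.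

Definition lf_open_cover (C : set (set X)) : Prop :=
  (forall U, C U -> open U) /\
  (forall x, exists2 U, C U & U x) /\
  (forall x : X, exists N : set X, nbhs x N /\ finite_set [set U | C U /\ U `&` N !=set0]).

Definition pou_subordinate (C : set (set X)) (phi : set X -> X -> R) : Prop :=
  (forall U, continuous (phi U)) /\
  (forall U x, 0 <= phi U x) /\
  (forall U, ~ C U -> forall x, phi U x = 0) /\
  (forall U, closure [set x | phi U x != 0] `<=` U) /\
  (forall x, finite_set [set U | phi U x != 0] /\
             \sum_(U \in [set: set X]) phi U x = 1).

(* geometric realization |N(C)| of the nerve of C, as the set of barycentric
   coordinate functions, with the topology induced from the product topology *)
Definition nerve_real (C : set (set X)) : set {ptws set X -> R} :=
  [set t | (forall U, 0 <= t U) /\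
           finite_set [set U | t U != 0] /\
           \sum_(U \in [set: set X]) t U = 1 /\
           [set U | t U != 0] `<=` C /\
           exists x : X, forall U, t U != 0 -> U x].

Definition nerve_vertex (U0 : set X) : {ptws set X -> R} :=
  fun U => (U == U0)%:R.

Definition canon_map (phi : set X -> X -> R) : X -> {ptws set X -> R} :=
  fun x U => phi U x.

(* open sets of the shape topology on pi_n(X,x0): V is open iff for every
   a in V there is (C,U0) in cov(X) (with a canonical map p) such that the
   coset a * ker(p_#) -- i.e. the fibre of p_# through a -- lies in V *)
Definition shape_open (x0 : X) (n : nat) (V : set (set ('rV[R]_n -> X))) : Prop :=
  V `<=` @pin_set x0 n /\
  forall a, V a -> exists (C : set (set X)) (U0 : set X) (phi : set X -> X -> R),
    [/\ lf_open_cover C, C U0, U0 x0,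
        pou_subordinate C phi /\ phi U0 x0 = 1 &
        forall b, @pin_set x0 n b ->
          (forall alpha beta, a alpha -> b beta ->
             rel_htpy (nerve_real C) (nerve_vertex U0)
                      (canon_map phi \o alpha) (canon_map phi \o beta)) ->
          V b].

Definition path_conn : Prop :=
  forall x y : X, exists gamma : R -> X,
    {within unitI, continuous gamma} /\ gamma 0 = x /\ gamma 1 = y.

End Space.
End Defs.

Arguments ucube {R} n.
Arguments ucube_bd {R} n.
Arguments Omega_in {R Y} S y0 n.
Arguments Omega {R X} x0 n.
Arguments pin_set {R X} x0 n.
Arguments rho_open {R X} x0 n V.
Arguments shape_open {R X} x0 n V.

(* Main.v *)
Require Import Defs.
From HB Require Import structures.
From mathcomp Require Import all_boot all_order all_algebra.
From mathcomp Require Import all_classical all_reals all_analysis.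
From mathcomp Require Import lra ring finmap.
Import Order.TTheory GRing.Theory Num.Theory numFieldTopology.Exports.
Local Open Scope classical_set_scope.
Local Open Scope ring_scope.

Lemma within_comp (T U V : topologicalType) (A : set T) (B : set U)
  (f : T -> U) (g : U -> V) : (forall x, A x -> B (f x)) ->
  {within A, continuous f} -> {within B, continuous g} ->
  {within A, continuous (g \o f)}.
Proof.
move=> AB /subspace_continuousP cf /subspace_continuousP cg.
apply/subspace_continuousP => x Ax.
apply: cvg_trans (cg _ (AB _ Ax)) => W /= Wg.
have := cf _ Ax _ Wg; rewrite /= /within/=.
rewrite /from_subspace /=.
move=> H; rewrite /nbhs /= /within /=; move: H; rewrite /nbhs/= /within /=.
by apply: filterS => z Hz Az; exact: Hz Az (AB _ Az).
Qed.

Lemma fst_cont (T U : topologicalType) : continuous (@fst T U).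
Proof. by move=> p; exact: cvg_fst. Qed.
Lemma snd_cont (T U : topologicalType) : continuous (@snd T U).
Proof. by move=> p; exact: cvg_snd. Qed.

Lemma ptws_cvg {I : Type} {V : topologicalType} (T : Type) (F : set_system T)
  {FF : Filter F} (f : T -> {ptws I -> V}) (g : {ptws I -> V}) :
  (forall i, (fun t => f t i) @ F --> g i) -> f @ F --> g.
Proof.
move=> hi; apply/cvg_sup => i U [? /= [[W oW <-]] Wg] /filterS; apply.
by apply: (hi i); apply: open_nbhs_nbhs.
Qed.

Section S.
Variable R : realType.

Lemma ucube_closed n : closed (@ucube R n).
Proof.
have -> : @ucube R n = \bigcap_(i in [set: 'I_n])
   ((fun t : 'rV[R]_n => t ord0 i) @^-1` [set s | 0 <= s <= 1]).
  by apply/seteqP; split => t /= Ht i; [move=> _|]; apply: Ht.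
apply: closed_bigI => i _; apply: preimage_closed.
  by move=> t _; exact: coord_continuous.
have -> : [set s : R | 0 <= s <= 1] = [set s | 0 <= s] `&` [set s | s <= 1].
  by apply/seteqP; split => s /=; [move/andP|move=> [-> ->]].
by apply: closedI; [exact: closed_ge|exact: closed_le].
Qed.

Lemma box_closed n (a b : R) :
  closed [set p : 'rV[R]_n * R | ucube n p.1 /\ a <= p.2 <= b].
Proof.
have -> : [set p : 'rV[R]_n * R | ucube n p.1 /\ a <= p.2 <= b] =
  (fst @^-1` ucube n) `&` (snd @^-1` [set s | a <= s]) `&` (snd @^-1` [set s | s <= b]).
  apply/seteqP; split => p /=; first by move=> [? /andP[]].
  by move=> [[? ?] ?]; split => //; apply/andP.
apply: closedI; first apply: closedI.
- by apply: preimage_closed; [move=> ? _; exact: fst_cont|exact: ucube_closed].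
- by apply: preimage_closed; [move=> ? _; exact: snd_cont|exact: closed_ge].
- by apply: preimage_closed; [move=> ? _; exact: snd_cont|exact: closed_le].
Qed.


Lemma aff_cont n (a b : R) :
  continuous (fun p : 'rV[R]_n * R => (p.1, a * p.2 + b)).
Proof.
move=> p; apply: (@cvg_pair _ _ _ _ (nbhs p.1) (nbhs (a * p.2 + b))); first exact: cvg_fst.
apply: cvgD; last exact: cvg_cst.
by apply: cvgM; [exact: cvg_cst|exact: cvg_snd].
Qed.

Definition CI n : set ('rV[R]_n * R) := @ucube R n `*` @unitI R.

Lemma aff_within n (Y : topologicalType) (A : set ('rV[R]_n * R)) (a b : R)
  (H : 'rV[R]_n * R -> Y) :
  (forall p, A p -> CI n (p.1, a * p.2 + b)) ->
  {within CI n, continuous H} ->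
  {within A, continuous (fun p => H (p.1, a * p.2 + b))}.
Proof.
move=> AB cH; apply: (@within_comp _ _ _ A (CI n) _ H AB) => //.
exact/continuous_subspaceT/aff_cont.
Qed.

Section Htpy.
Variables (Y : topologicalType) (S : set Y) (y0 : Y) (n : nat).

Lemma htpy_sym (f g : 'rV[R]_n -> Y) : rel_htpy S y0 f g -> rel_htpy S y0 g f.
Proof.
move=> [H [cH [HS [Hfg Hb]]]].
exists (fun p => H (p.1, -1 * p.2 + 1)); split; [|split; [|split]].
- apply: aff_within cH => -[t s] [/= ct /andP[s0 s1]]; split => //=.
  by apply/andP; split; lra.
- move=> [t s] [/= ct /andP[s0 s1]]; apply: HS; split => //=.
  by apply/andP; split; lra.
- move=> t ct /=; have [h0 h1] := Hfg t ct.
  by rewrite mulr0 add0r mulr1 addNr.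
- move=> t s tb /andP[s0 s1]; apply: Hb => //; rewrite /unitI /=.
  by apply/andP; split; lra.
Qed.

Lemma htpy_trans (f g h : 'rV[R]_n -> Y) :
  rel_htpy S y0 f g -> rel_htpy S y0 g h -> rel_htpy S y0 f h.
Proof.
move=> [H1 [cH1 [HS1 [Hfg1 Hb1]]]] [H2 [cH2 [HS2 [Hfg2 Hb2]]]].
pose H p := if p.2 <= 1/2 then H1 (p.1, 2 * p.2 + 0) else H2 (p.1, 2 * p.2 + -1).
pose A1 := [set p : 'rV[R]_n * R | ucube n p.1 /\ 0 <= p.2 <= 1/2].
pose A2 := [set p : 'rV[R]_n * R | ucube n p.1 /\ 1/2 <= p.2 <= 1].
have E2 : forall p, A2 p -> H p = H2 (p.1, 2 * p.2 + -1).
  move=> [t s] [/= ct /andP[s0 s1]]; rewrite /H /=.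
  case: ifPn => // sle; have -> : s = 1/2 by apply/eqP; rewrite eq_le sle s0.
  have -> : 2 * (1/2) + 0 = 1 :> R by field.
  have -> : 2 * (1/2) + -1 = 0 :> R by field.
  by have [_ ->] := Hfg1 t ct; have [-> _] := Hfg2 t ct.
exists H; split; [|split; [|split]].
- apply: (@continuous_subspaceW _ _ _ (A1 `|` A2)).
    move=> [t s] [/= ct /andP[s0 s1]]; case: (lerP s (1/2)) => sh.
      by left; split => //; apply/andP.
    by right; split => //; apply/andP; split => //; exact: ltW.
  apply: withinU_continuous; [exact: box_closed|exact: box_closed| |].
  + apply: (@subspace_eq_continuous _ A1 _ (fun p => H1 (p.1, 2 * p.2 + 0))).
      move=> [t s] /set_mem [/= ct /andP[s0 s1]]; by change (H1 (t, 2*s+0) = H (t,s)); rewrite /H /= s1.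
    apply: aff_within cH1 => -[t s] [/= ct /andP[s0 s1]]; split => //=.
    by rewrite /unitI /=; apply/andP; split; lra.
  + apply: (@subspace_eq_continuous _ A2 _ (fun p => H2 (p.1, 2 * p.2 + -1))).
      by move=> p /set_mem /E2; rewrite /from_subspace => ->.
    apply: aff_within cH2 => -[t s] [/= ct /andP[s0 s1]]; split => //=.
    by rewrite /unitI /=; apply/andP; split; lra.
- move=> [t s] [/= ct /andP[s0 s1]]; rewrite /H /=; case: ifPn => sh.
    by apply: HS1; split => //=; rewrite /unitI /=; apply/andP; split; lra.
  by apply: HS2; split => //=; rewrite /unitI /=; apply/andP; split; rewrite -?ltNge in sh *; lra.
- move=> t ct; rewrite /H /= ifT; last lra.
  rewrite ifF; last by apply/negbTE; rewrite -ltNge; lra.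
  rewrite mulr0 addr0 mulr1 (_ : 2 + -1 = 1 :> R); last lra.
  by have [-> _] := Hfg1 t ct; have [_ ->] := Hfg2 t ct.
- move=> t s tb /andP[s0 s1]; rewrite /H /=; case: ifPn => sh.
    by apply: Hb1 => //; rewrite /unitI /=; apply/andP; split; lra.
  by apply: Hb2 => //; rewrite /unitI /=; apply/andP; split; rewrite -?ltNge in sh *; lra.
Qed.

Lemma htpy_refl_free (f g h : 'rV[R]_n -> Y) :
  rel_htpy S y0 h f -> rel_htpy S y0 h g -> rel_htpy S y0 f g.
Proof. by move=> /htpy_sym hf hg; exact: htpy_trans hf hg. Qed.

End Htpy.

Section Nerve.
Variables (X : metricType R) (C : set (set X)) (phi : set X -> X -> R).
Hypotheses (hC : lf_open_cover C) (hphi : pou_subordinate C phi).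

Lemma phi_sub U z : phi U z != 0 -> U z.
Proof.
move=> h; have [_ [_ [_ [hcl _]]]] := hphi; apply: hcl.
by apply: subset_closure.
Qed.

Lemma phi_C U z : phi U z != 0 -> C U.
Proof.
move=> h; have [_ [_ [h0 _]]] := hphi.
by apply: contrapT => nC; move: h; rewrite h0 // eqxx.
Qed.

Lemma key_local x : exists2 r : R, 0 < r &
  forall U z, ball x r z -> phi U z != 0 -> ball x r `<=` U.
Proof.
have [hop [_ lf]] := hC; have [N [Nx finS]] := lf x.
have [s Ss] := finite_fsetP.1 finS.
pose Q U (r : R) := forall z, ball x r z -> phi U z != 0 -> ball x r `<=` U.
have H1 : (0:R)^'+ [set r : R | forall U : set X, U \in s -> Q U r].
  suff HB : forall U : set X, U \in s -> (0:R)^'+ [set r | Q U r].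
    by apply: filterS (filter_bigI _ HB) => r h U Us; exact: h.
  move=> U Us.
  have : [set` s] U by [].
  rewrite -Ss => -[CU _].
  case: (pselect (closure [set z | phi U z != 0] x)) => cl.
    have [_ [_ [_ [hcl _]]]] := hphi.
    have xU : U x by apply: hcl.
    have : nbhs x U by apply: open_nbhs_nbhs; split => //; exact: hop.
    move=> /nbhs_ballP [r0 r00 r0U].
    near=> r => z _ _; apply: subset_trans r0U; apply: le_ball.
    by apply: ltW; near: r; exact: nbhs_right_lt.
  have [B [nB hB]] : exists B, nbhs x B /\ ~ ([set z | phi U z != 0] `&` B !=set0).
    apply: contrapT => hn; apply: cl => B nB; apply: contrapT => hB.
    by apply: hn; exists B.
  move: nB => /nbhs_ballP [r0 r00 r0B].
  near=> r => z xz hz; exfalso; apply: hB; exists z; split => //.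
  apply: r0B; apply: le_ball xz; apply: ltW.
  by near: r; exact: nbhs_right_lt.
have H2 : (0:R)^'+ [set r | ball x r `<=` N].
  move: Nx => /nbhs_ballP [r0 r00 r0N].
  near=> r; apply: subset_trans r0N; apply: le_ball; apply: ltW.
  by near: r; exact: nbhs_right_lt.
have H3 : (0:R)^'+ [set r : R | 0 < r] by exact: nbhs_right_gt.
have [r [h1 [h2 h3]]] := filter_ex (filterI H1 (filterI H2 H3)).
exists r => // U z xz hz.
have : [set` s] U by rewrite -Ss; split; [exact: phi_C hz|exists z; split; [exact: phi_sub|exact: h2]].
by move=> Us; exact: (h1 U Us z xz hz).
Unshelve. all: by end_near.
Qed.

Lemma lebesgue : compact [set: X] -> exists2 e : R, 0 < e &
  forall z y, ball z e y -> forall U, phi U z != 0 -> U y.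
Proof.
move=> cX.
pose P (e : R) (z : X) := 0 < e -> forall y, ball z e y -> forall U, phi U z != 0 -> U y.
have Hn : \forall e \near (0:R)^'+, [set: X] `<=` P e.
  apply: ((compact_near_coveringP _).1 cX R ((0:R)^'+) P _).
  move=> x _; have [r r0 hr] := key_local x.
  exists (ball x (r/2), [set e : R | e < r/2]) => /=.
    by split; [apply: nbhsx_ballx; lra|apply: nbhs_right_lt; lra].
  move=> [z e] /= [xz er] e0 y zy U hU.
  have xz' : ball x r z by apply: le_ball xz; lra.
  apply: (hr U z xz' hU).
  have := ball_triangle xz zy; apply: le_ball; lra.
have Hn2 : (0:R)^'+ [set e : R | [set: X] `<=` P e] := Hn.
have [e] := filter_ex (filterI Hn2 (nbhs_right_gt (0:R))); move=> [Ae e0].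
exists e => // z y zy U hU.
exact: (Ae z I e0 y zy U hU).
Qed.


Lemma p_cont : continuous (canon_map phi : X -> {ptws set X -> R}).
Proof.
move=> x; apply: ptws_cvg => U.
have [hc _] := hphi; exact: hc.
Qed.

Lemma sumT_fin (Sf : set (set X)) (g : set X -> R) : finite_set Sf ->
  (forall U, ~ Sf U -> g U = 0) ->
  \sum_(U \in [set: set X]) g U = \sum_(U \in Sf) g U.
Proof.
move=> fS hg; apply/esym/fsbig_widen => // U [_ nU]; exact: hg.
Qed.

Lemma supp_fin z : finite_set [set U | phi U z != 0].
Proof. by have [_ [_ [_ [_ h]]]] := hphi; have [] := h z. Qed.

Lemma sum1 z : \sum_(U \in [set: set X]) phi U z = 1.
Proof. by have [_ [_ [_ [_ h]]]] := hphi; have [] := h z. Qed.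

Lemma phi_ge0 U z : 0 <= phi U z.
Proof. by have [_ [h _]] := hphi. Qed.

Definition comb (l : R) (a b : {ptws set X -> R}) : {ptws set X -> R} :=
  fun U => (1 - l) * a U + l * b U.

Lemma comb_nerve y z w l : 0 <= l <= 1 ->
  (l != 1 -> forall U, phi U y != 0 -> U w) ->
  (l != 0 -> forall U, phi U z != 0 -> U w) ->
  nerve_real C (comb l (canon_map phi y) (canon_map phi z)).
Proof.
move=> /andP[l0 l1] hy hz; rewrite /comb /canon_map.
pose Sf := [set U | phi U y != 0] `|` [set U | phi U z != 0].
have fS : finite_set Sf by rewrite /Sf finite_setU; split; exact: supp_fin.
have out : forall U, ~ Sf U -> phi U y = 0 /\ phi U z = 0.
  move=> U nS; split; apply/eqP; apply: contrapT => h; apply: nS; [left|right]; exact/negP.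
have nz : forall U, (1 - l) * phi U y + l * phi U z != 0 ->
    ((1 - l) * phi U y != 0) \/ (l * phi U z != 0).
  move=> U h; apply: contrapT => /not_orP [/negP/negPn/eqP h1 /negP/negPn/eqP h2].
  by move: h; rewrite h1 h2 addr0 eqxx.
split; [|split; [|split; [|split]]].
- move=> U; apply: addr_ge0; apply: mulr_ge0 => //; rewrite ?subr_ge0 //; exact: phi_ge0.
- apply: sub_finite_set fS => U /= /nz []; rewrite mulf_eq0 negb_or => /andP[_ h];
    [left|right]; exact: h.
- rewrite (sumT_fin _ _ fS); last by move=> U /out [-> ->]; rewrite !mulr0 addr0.
  have ey : \sum_(U \in Sf) phi U y = 1.
    by rewrite -(sumT_fin _ _ fS) ?sum1 // => U /out [].
  have ez : \sum_(U \in Sf) phi U z = 1.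
    by rewrite -(sumT_fin _ _ fS) ?sum1 // => U /out [].
  move: ey ez; rewrite !fsbig_finite // big_split /= -!mulr_sumr => -> ->.
  by rewrite !mulr1 subrK.
- move=> U /= /nz []; rewrite mulf_eq0 negb_or => /andP[_ h]; exact: phi_C h.
- exists w => U /nz []; rewrite mulf_eq0 negb_or => /andP[h1 h].
    by apply: hy h; apply: contraNneq h1 => ->; rewrite subrr.
  exact: hz h.
Qed.

Lemma p_nerve x : nerve_real C (canon_map phi x).
Proof.
have -> : canon_map phi x = comb 0 (canon_map phi x) (canon_map phi x).
  by apply/funext => U; rewrite /comb subr0 mul1r mul0r addr0.
apply: (@comb_nerve x x x 0); first by rewrite lexx ler01.
- by move=> _ U; exact: phi_sub.
- by rewrite eqxx.
Qed.

Lemma p_vertex x0 U0 : phi U0 x0 = 1 -> canon_map phi x0 = nerve_vertex U0.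
Proof.
move=> h1; apply/funext => U; rewrite /canon_map /nerve_vertex.
case: eqP => [-> //|nU].
have := sum1 x0; rewrite (sumT_fin _ _ (supp_fin x0)); last first.
  by move=> V /= nV; apply/eqP; apply: contrapT => /negP.
rewrite (fsbigD1 U0) ?h1 //=; last by rewrite h1 oner_neq0.
  2: exact: supp_fin.
move=> /eqP; rewrite -[X in _ == X]addr0 (inj_eq (addrI _)) => /eqP h0.
apply/eqP; apply: contrapT => /negP hU.
have : phi U x0 = 0.
  apply: (pfsumr_eq0 _ _ h0).
  - by apply: finite_setD; exact: supp_fin.
  - by move=> V _; exact: phi_ge0.
  - by split => //= /eqP.
by move/eqP; rewrite (negbTE hU).
Qed.


Lemma within_phi n U (a : 'rV[R]_n -> X) : {within ucube n, continuous a} ->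
  {within CI n, continuous (fun q : 'rV[R]_n * R => phi U (a q.1))}.
Proof.
move=> ca.
have c1 : {within CI n, continuous (a \o fst)}.
  apply: (@within_comp _ _ _ (CI n) (ucube n)) => //.
  - by move=> q [].
  - exact/continuous_subspaceT/fst_cont.
have [hc _] := hphi.
have h := @within_comp _ _ _ (CI n) [set: X] _ (phi U) (fun _ _ => I) c1 (@continuous_subspaceT _ _ [set: X] _ (hc U)).
exact: h.
Qed.

Lemma map_htpy n x0 U0 (a b : 'rV[R]_n -> X) : phi U0 x0 = 1 ->
  rel_htpy [set: X] x0 a b ->
  rel_htpy (nerve_real C) (nerve_vertex U0) (canon_map phi \o a) (canon_map phi \o b).
Proof.
move=> h1 [H [cH [_ [Hab Hb]]]].
exists (canon_map phi \o H); split; [|split; [|split]].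
- apply: (@within_comp _ _ _ _ [set: X]) => //.
  exact/continuous_subspaceT/p_cont.
- by move=> q _; exact: p_nerve.
- by move=> t ct /=; have [-> ->] := Hab t ct.
- by move=> t s tb si /=; rewrite Hb // (p_vertex _ _ h1).
Qed.

Lemma line_htpy n x0 U0 (a b : 'rV[R]_n -> X) : phi U0 x0 = 1 ->
  Omega x0 n a -> Omega x0 n b ->
  (forall t, ucube n t -> forall U, phi U (b t) != 0 -> U (a t)) ->
  rel_htpy (nerve_real C) (nerve_vertex U0) (canon_map phi \o a) (canon_map phi \o b).
Proof.
move=> h1 [ca [_ ba]] [cb [_ bb]] hab.
exists (fun q => comb q.2 (canon_map phi (a q.1)) (canon_map phi (b q.1))).
split; [|split; [|split]].
- move=> q; apply: ptws_cvg => U /=; rewrite /comb /canon_map /=.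
  have cs : {within CI n, continuous (fun q : 'rV[R]_n * R => q.2)}.
    exact/continuous_subspaceT/snd_cont.
  apply: cvgD; apply: cvgM.
  + by apply: cvgB; [exact: cvg_cst|exact: cs].
  + exact: within_phi.
  + exact: cs.
  + exact: within_phi.
- move=> [t s] [/= ct si]; apply: (@comb_nerve _ _ (a t)) => //.
  + by move=> _ U; exact: phi_sub.
  + by move=> _; exact: hab.
- move=> t ct; split; apply/funext => U; rewrite /comb /=.
    by rewrite subr0 mul1r mul0r addr0.
  by rewrite subrr mul0r add0r mul1r.
- move=> t s tb si; rewrite ba // bb //.
  rewrite -(p_vertex _ _ h1); apply/funext => U; rewrite /comb.
  by rewrite -mulrDl subrK mul1r.
Qed.

End Nerve.

Lemma bounded_X (X : metricType R) (x0 : X) : compact [set: X] ->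
  exists M : R, forall y, mdist x0 y < M.
Proof.
move=> cX.
pose P (M : R) (y : X) := mdist x0 y < M.
have Hn : \forall M \near (+oo : set_system R), [set: X] `<=` P M.
  apply: ((compact_near_coveringP _).1 cX R (+oo : set_system R) P _).
  move=> x _.
  exists (ball x 1, [set M : R | mdist x0 x + 1 < M]) => /=.
    by split; [apply: nbhsx_ballx; lra|apply: nbhs_pinfty_gt; exact: num_real].
  move=> [z M] /= [xz hM]; rewrite /P.
  move: xz; rewrite ballEmdist /= => xz.
  have := metric_triangle x0 x z; lra.
have Hn2 : (+oo : set_system R) [set M : R | [set: X] `<=` P M] := Hn.
have [M HM] := filter_ex Hn2.
by exists M => y; exact: HM.
Qed.

End S.

Theorem proposition5p2 (R : realType) (X : metricType R) (x0 : X) (n : nat) :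
  compact [set: X] -> path_conn X -> (1 <= n)%N ->
  forall V : set (set ('rV[R]_n -> X)),
    shape_open x0 n V -> rho_open x0 n V.
Proof.
move=> cX _ _ V [Vpin HV]; split => // a Va.
have [C [U0 [phi [hC CU0 U0x0 [hphi h1] Hb]]]] := HV a Va.
have [e e0 He] := @lebesgue _ _ _ _ hC hphi cX.
have [M HM] := @bounded_X _ _ x0 cX.
exists e => // b pb rab.
have [ra ora ea] := Vpin a Va.
have [rb orb eb] := pb.
apply: Hb => // alpha beta aal bbe.
have [r [al0 [be0 [aal0 [bbe0 ->]]]] rlt] : exists2 r,
    (exists al0 be0, a al0 /\ b be0 /\ r = mu_dist al0 be0) & r < e.
  by apply: inf_lt => //; exists (mu_dist alpha beta), alpha, beta.
move: aal0 bbe0 aal bbe; rewrite ea eb.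
move=> [oal0 hal0] [obe0 hbe0] [oal hal] [obe hbe].
have close : forall t, ucube n t -> forall U, phi U (be0 t) != 0 -> U (al0 t).
  move=> t ct U hU; apply: (He (be0 t) (al0 t)) hU.
  rewrite ballEmdist /= metric_sym.
  apply: le_lt_trans rlt; rewrite /mu_dist.
  apply: ub_le_sup; last by exists t.
  exists (M + M) => _ [t' _ <-].
  have h4 := metric_triangle (al0 t') x0 (be0 t').
  rewrite (metric_sym (al0 t') x0) in h4.
  have := HM (al0 t'); have := HM (be0 t'); lra.
apply: htpy_trans (@map_htpy _ _ _ _ hphi _ _ _ _ _ h1 (@htpy_sym _ _ _ _ _ _ _ hal)) _.
apply: htpy_trans (@map_htpy _ _ _ _ hphi _ _ _ _ _ h1 hal0) _.
apply: htpy_trans (@line_htpy _ _ _ _ hphi _ _ _ _ _ h1 oal0 obe0 close) _.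
apply: htpy_trans (@map_htpy _ _ _ _ hphi _ _ _ _ _ h1 (@htpy_sym _ _ _ _ _ _ _ hbe0)) _.
exact: (@map_htpy _ _ _ _ hphi _ _ _ _ _ h1 hbe).
Qed.
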